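(* In the setting of the context, let $J_1,J_2$ be the compatible pair of Poisson vector fields $J_i=\alpha_i(\widehat e_2+\mu_i\widehat e_3)$ on an open set $U$ with respect to which $\dot x=v(x)$ is locally bi-Hamiltonian, as in the context, and let $\phi=\alpha_1\alpha_2(\mu_2-\mu_1)/\Vert v\Vert$. Let $\boldsymbol J_i$ be the 1-forms metrically dual to $J_i$ and let $\boldsymbol\beta$ be the 1-form with $d\boldsymbol J_i=\boldsymbol\beta\wedge\boldsymbol J_i$ for $i=1,2$ (it exists and is unique since $\boldsymbol J_1\wedge\boldsymbol J_2\neq0$ and the pair is compatible). Then $$\iota_{\widehat e_1}\boldsymbol\beta=\iota_{\widehat e_1}\big(d\ln|\phi|\big).$$
   Context: Setting: $M$ is an oriented three-dimensional manifold with Riemannian metric $g$; $\nabla$, $\nabla\times$, $\times$ denote gradient, curl and cross product. A Poisson vector field is $J$ with $J\cdot(\nabla\times J)=0$; compatible means $J_1+J_2$ is also Poisson. $v$ is nowhere vanishing, $\widehat e_1=v/\Vert v\Vert$ extended to a local oriented orthonormal frame $(\widehat e_1,\widehat e_2,\widehat e_3)$, $\widehat e_3=\widehat e_1\times\widehat e_2$, with $[\widehat e_i,\widehat e_j]=C_{ij}^k\widehat e_k$. The pair is given by nowhere-equal solutions $\mu_1,\mu_2$ of $\widehat e_1\cdot\nabla\mu=-C_{31}^{2}-\mu(C_{31}^{3}+C_{12}^{2})-\mu^{2}C_{12}^{3}$ and nowhere-vanishing $\alpha_1,\alpha_2$ with $\widehat e_1\cdot\nabla\ln|\alpha_i/\Vert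 v\Vert|=C_{31}^{3}+\mu_iC_{12}^{3}$; there are local functions $H_1,H_2$ with $v=J_1\times\nabla H_2=J_2\times\nabla H_1$. *)

(* Defs.v *)
(* Local frame calculus on an open set U of an oriented
   Riemannian 3-manifold, expressed in the oriented orthonormal frame
   (e_1,e_2,e_3) with [e_i,e_j] = C_ij^k e_k.  The ring R plays the role of
   the (smooth) functions on U; e i is the derivation f |-> e_i . grad f. *)
From HB Require Import structures.
From mathcomp Require Import all_boot all_order all_algebra.
Set Implicit Arguments. Unset Strict Implicit. Unset Printing Implicit Defensive.
Import Order.TTheory GRing.Theory Num.Theory.
Local Open Scope ring_scope.

Definition I1 : 'I_3 := @Ordinal 3 0 isT.
Definition I2 : 'I_3 := @Ordinal 3 1 isT.
Definition I3 : 'I_3 := @Ordinal 3 2 isT.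

(* vector fields / 1-forms on U, via their components in the orthonormal
   frame (for an orthonormal frame the metric dual has the same components) *)
Definition vec3 (R : Type) := 'I_3 -> R.

Definition mk3 (R : Type) (a b c : R) : vec3 R :=
  fun k => match val k with 0%N => a | 1%N => b | _ => c end.

Definition is_derivation (R : comUnitRingType) (D : R -> R) : Prop :=
  (forall f g, D (f + g) = D f + D g) /\ (forall f g, D (f * g) = D f * g + f * D g).

Definition frame_bracket (R : comUnitRingType) (e : 'I_3 -> R -> R)
  (C : 'I_3 -> 'I_3 -> 'I_3 -> R) : Prop :=
  forall i j f, e i (e j f) - e j (e i f) = \sum_(k < 3) C i j k * e k f.

Definition frame_indep (R : comUnitRingType) (e : 'I_3 -> R -> R) : Prop :=
  forall a : 'I_3 -> R, (forall f, \sum_(k < 3) a k * e k f = 0) -> forall k, a k = 0.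

Definition grad (R : comUnitRingType) (e : 'I_3 -> R -> R) (f : R) : vec3 R :=
  fun k => e k f.

Definition dot (R : comUnitRingType) (X Y : vec3 R) : R := \sum_(k < 3) X k * Y k.

Definition vadd3 (R : comUnitRingType) (X Y : vec3 R) : vec3 R := fun k => X k + Y k.

Definition cross (R : comUnitRingType) (X Y : vec3 R) : vec3 R :=
  mk3 (X I2 * Y I3 - X I3 * Y I2) (X I3 * Y I1 - X I1 * Y I3) (X I1 * Y I2 - X I2 * Y I1).

Definition d1 (R : comUnitRingType) (e : 'I_3 -> R -> R)
  (C : 'I_3 -> 'I_3 -> 'I_3 -> R) (w : vec3 R) (i j : 'I_3) : R :=
  e i (w j) - e j (w i) - \sum_(k < 3) C i j k * w k.

Definition wedge11 (R : comUnitRingType) (b w : vec3 R) (i j : 'I_3) : R :=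
  b i * w j - b j * w i.

(* curl J = ( * d J^flat )^sharp in the oriented orthonormal frame *)
Definition curl (R : comUnitRingType) (e : 'I_3 -> R -> R)
  (C : 'I_3 -> 'I_3 -> 'I_3 -> R) (J : vec3 R) : vec3 R :=
  mk3 (d1 e C J I2 I3) (d1 e C J I3 I1) (d1 e C J I1 I2).

Definition poisson (R : comUnitRingType) (e : 'I_3 -> R -> R)
  (C : 'I_3 -> 'I_3 -> 'I_3 -> R) (J : vec3 R) : Prop :=
  dot J (curl e C J) = 0.

Definition Jfield (R : comUnitRingType) (alpha mu : R) : vec3 R :=
  mk3 0 alpha (alpha * mu).

(* Main.v *)
Require Import Defs.
From HB Require Import structures.
From mathcomp Require Import all_boot all_order all_algebra.
From mathcomp Require Import ring.
Import Order.TTheory GRing.Theory Num.Theory.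
Local Open Scope ring_scope.

Section Aux.
Variable R : comUnitRingType.
Variable D : R -> R.
Hypothesis hD : is_derivation D.

Lemma der0 : D 0 = 0.
Proof. case: hD => Ha _. have := Ha 0 0. rewrite addr0 => H.
by apply: (addrI (D 0)); rewrite -H addr0. Qed.

Lemma der1 : D 1 = 0.
Proof. case: hD => _ Hm. have := Hm 1 1. rewrite !mulr1 mul1r => H.
by apply: (addrI (D 1)); rewrite -H addr0. Qed.

Lemma derN x : D (- x) = - D x.
Proof. case: hD => Ha _. have := Ha x (- x). rewrite subrr der0 => H.
by apply/eqP; rewrite -subr_eq0 opprK addrC -H. Qed.

Lemma derV x : x \is a GRing.unit -> D (x^-1) = - (D x * x^-1 * x^-1).
Proof. move=> ux. case: hD => _ Hm. have := Hm x x^-1. rewrite mulrV // der1 => H.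
have -> : D x^-1 = x^-1 * (x * D x^-1) by rewrite mulrA mulVr // mul1r.
have -> : x * D x^-1 = - (D x * x^-1) by apply/eqP; rewrite -subr_eq0 opprK addrC -H.
ring. Qed.
End Aux.

Lemma sum3 (R : comUnitRingType) (F : 'I_3 -> R) :
  \sum_(k < 3) F k = F I1 + F I2 + F I3.
Proof.
rewrite !big_ord_recl big_ord0 addr0 addrA.
by congr (F _ + F _ + F _); apply: val_inj.
Qed.

Theorem lemma2 (R : comUnitRingType) (e : 'I_3 -> R -> R)
  (C : 'I_3 -> 'I_3 -> 'I_3 -> R)
  (nv mu1 mu2 a1 a2 H1 H2 : R) (beta : vec3 R) :
  (forall i, is_derivation (e i)) ->
  frame_bracket e C ->
  frame_indep e ->
  nv \is a GRing.unit ->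
  a1 \is a GRing.unit ->
  a2 \is a GRing.unit ->
  (mu2 - mu1) \is a GRing.unit ->
  (forall mu, mu = mu1 \/ mu = mu2 ->
     e I1 mu = - C I3 I1 I2 - mu * (C I3 I1 I3 + C I1 I2 I2) - mu ^+ 2 * C I1 I2 I3) ->
  e I1 (a1 / nv) / (a1 / nv) = C I3 I1 I3 + mu1 * C I1 I2 I3 ->
  e I1 (a2 / nv) / (a2 / nv) = C I3 I1 I3 + mu2 * C I1 I2 I3 ->
  poisson e C (Jfield a1 mu1) ->
  poisson e C (Jfield a2 mu2) ->
  poisson e C (vadd3 (Jfield a1 mu1) (Jfield a2 mu2)) ->
  (forall k, mk3 nv 0 0 k = cross (Jfield a1 mu1) (grad e H2) k) ->
  (forall k, mk3 nv 0 0 k = cross (Jfield a2 mu2) (grad e H1) k) ->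
  (forall i j, d1 e C (Jfield a1 mu1) i j = wedge11 beta (Jfield a1 mu1) i j) ->
  (forall i j, d1 e C (Jfield a2 mu2) i j = wedge11 beta (Jfield a2 mu2) i j) ->
  let phi := a1 * a2 * (mu2 - mu1) / nv in
  beta I1 = e I1 phi / phi.
Proof.
move=> Hder _ _ unv ua1 ua2 udm Hmu h1 h2 _ _ _ _ _ Hd1 _ phi.
have hD := Hder I1.
have [Dadd Dmul] := hD.
have E12 := Hd1 I1 I2.
rewrite /d1 /wedge11 sum3 /Jfield /mk3 /= (@der0 _ _ (Hder I2)) in E12.
set A1 := e I1 a1 in E12 h1 *.
set A2 := e I1 a2 in h2 *.
set N := e I1 nv in h1 h2 *.
have Ha1 := mulrV ua1. have Ha2 := mulrV ua2. have Hn := mulrV unv.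
have Hd := mulrV udm.
have Eb : beta I1 = A1 * a1^-1 - C I1 I2 I2 - C I1 I2 I3 * mu1.
  have -> : beta I1 = beta I1 * (a1 * a1^-1) by rewrite Ha1 mulr1.
  have -> : beta I1 * (a1 * a1^-1) = (beta I1 * a1 - beta I2 * 0) * a1^-1 by ring.
  rewrite -E12.
  have -> : (A1 - 0 - (C I1 I2 I1 * 0 + C I1 I2 I2 * a1 + C I1 I2 I3 * (a1 * mu1))) * a1^-1
    = A1 * a1^-1 - (C I1 I2 I2 + C I1 I2 I3 * mu1) * (a1 * a1^-1) by ring.
  rewrite Ha1; ring.
have h' : forall a A c, a \is a GRing.unit -> e I1 a = A ->
    e I1 (a / nv) / (a / nv) = c -> A * a^-1 - N * nv^-1 = c.
  move=> a A c ua ea h. rewrite -h Dmul ea (@derV _ _ hD _ unv) invrM ?unitrV // invrK.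
  have -> : (A * nv^-1 + a * - (N * nv^-1 * nv^-1)) * (nv * a^-1)
     = A * a^-1 * (nv^-1 * nv) - N * nv^-1 * (a * a^-1) * (nv^-1 * nv) by ring.
  by rewrite mulrV // mulVr // !mulr1.
have h1' := h' a1 A1 _ ua1 erefl h1.
have h2' := h' a2 A2 _ ua2 erefl h2.
have Edm : e I1 (mu2 - mu1) = (mu2 - mu1) * (- (C I3 I1 I3 + C I1 I2 I2) - (mu1 + mu2) * C I1 I2 I3).
  rewrite Dadd (@derN _ _ hD) (Hmu mu2 (or_intror erefl)) (Hmu mu1 (or_introl erefl)). ring.
set dm := mu2 - mu1 in Edm Hd udm *.
rewrite /phi Dmul (@derV _ _ hD _ unv) Dmul Edm Dmul -/A1 -/A2.
rewrite invrM ?unitrV ?unitrM ?ua1 ?ua2 ?udm // invrK invrM ?unitrM ?ua1 ?ua2 ?udm //.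
rewrite invrM //.
set C313 := C I3 I1 I3 in h1' h2' Edm *.
set C122 := C I1 I2 I2 in Eb Edm *.
set C123 := C I1 I2 I3 in Eb Edm h1' h2' *.
have h2'' : A2 / a2 = C313 + mu2 * C123 + N / nv by rewrite -h2' subrK.
have -> : ((A1 * a2 + a1 * A2) * dm +
   a1 * a2 * (dm * (- (C313 + C122) - (mu1 + mu2) * C123))) * nv^-1 +
   a1 * a2 * dm * - (N * nv^-1 * nv^-1) = 
   (A1 * a1^-1 + A2 * a2^-1 - (C313 + C122) - (mu1 + mu2) * C123 - N * nv^-1)
     * (a1 * a2 * dm * nv^-1).
  transitivity (A1*a2*dm/nv*(a1/a1) + a1*A2*dm/nv*(a2/a2) + a1*a2*dm*(-(C313+C122) - (mu1+mu2)*C123)/nv - a1*a2*dm*(N/nv/nv) : R).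
  rewrite Ha1 Ha2 !mulr1; ring. ring.
rewrite -/dm.
rewrite [RHS](_ : _ = (A1 * a1^-1 + A2 * a2^-1 - (C313 + C122) - (mu1 + mu2) * C123 - N * nv^-1)
  * ((a1/a1)*(a2/a2)*(dm/dm)*(nv^-1*nv))); last by ring.
rewrite Ha1 Ha2 Hd mulVr // !mulr1 Eb h2''; ring.
Qed.
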